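(* Let $(\Lambda_t)_{t\ge 0}$ be a family of completely positive trace-preserving (CPTP) maps on single-qubit density matrices with $\Lambda_0=\mathrm{id}$. Suppose that for every $0\le s\le t$ there is a linear map $V_{t,s}$ with $\Lambda_t=V_{t,s}\circ\Lambda_s$ that admits the decomposition $$V_{t,s}[X]=p\,\mathcal{E}_1[X]+(1-p)\,\mathcal{E}_2[X^{T}]$$ for all $2\times 2$ matrices $X$, where $p=p(t,s)\in[0,1]$, $\mathcal{E}_1=\mathcal{E}_1^{(t,s)}$ and $\mathcal{E}_2=\mathcal{E}_2^{(t,s)}$ are CPTP maps on qubits, and $X^T$ is the transpose in a fixed basis. (Such a $V_{t,s}$ may fail to be completely positive, i.e. the evolution may be non-Markovian.) Then for every contractive function $f$ and every pair of single-qubit states $\rho,\sigma$, the function $t\mapsto f(\Lambda_t[\rho],\Lambda_t[\sigma])$ is non-increasing: $f(\Lambda_t[\rho],\Lambda_t[\sigma])\le f(\Lambda_s[\rho],\Lambda_s[\sigma])$ for all $0\le s\le t$; in particular $\frac{\mathrm d}{\mathrm dt}f(\Lambda_t[\rho],\Lambda_t[\sigma])\le 0$ wherever the derivative exists.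
   Context: A function $f(\rho,\sigma)$ of pairs of quantum states (density matrices) is called contractive if $f(\Lambda[\rho],\Lambda[\sigma])\le f(\rho,\sigma)$ for every CPTP map $\Lambda$ and all states $\rho,\sigma$ (examples: trace distance $\tfrac12\|\rho-\sigma\|_1$, infidelity $1-\|\sqrt\rho\sqrt\sigma\|_1$, quantum relative entropy). An evolution $(\Lambda_t)$ is called Markovian (CP-divisible) if for every $0\le s\le t$ there exists a CPTP map $V_{t,s}$ with $\Lambda_t=V_{t,s}\circ\Lambda_s$, and non-Markovian otherwise. *)

(* Defs.v *)
From HB Require Import structures.
From mathcomp Require Import all_boot all_order all_algebra.
Set Implicit Arguments. Unset Strict Implicit. Unset Printing Implicit Defensive.
Import Order.TTheory GRing.Theory Num.Theory.
Local Open Scope ring_scope.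

Section QubitDefs.
Variable C : numClosedFieldType.

Definition adjv (v : 'cV[C]_2) : 'rV[C]_2 := (map_mx (fun z => z^*) v)^T.

Definition psd (A : 'M[C]_2) : Prop :=
  forall v : 'cV[C]_2, 0 <= (adjv v *m A *m v) 0 0.

Definition is_state (rho : 'M[C]_2) : Prop := psd rho /\ \tr rho = 1.

(* positivity of an operator on C^n (x) C^2, given as an n x n array of
   2x2 blocks B i j; this is <w, B w> >= 0 for all w = (v_i)_i *)
Definition block_psd (n : nat) (B : 'I_n -> 'I_n -> 'M[C]_2) : Prop :=
  forall v : 'I_n -> 'cV[C]_2,
    0 <= \sum_(i < n) \sum_(j < n) (adjv (v i) *m B i j *m v j) 0 0.

Definition is_linear_map (L : 'M[C]_2 -> 'M[C]_2) : Prop :=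
  forall (a : C) (X Y : 'M[C]_2), L (a *: X + Y) = a *: L X + L Y.

(* complete positivity: L (x) id_n is positive for every n *)
Definition completely_positive (L : 'M[C]_2 -> 'M[C]_2) : Prop :=
  forall (n : nat) (B : 'I_n -> 'I_n -> 'M[C]_2),
    block_psd B -> block_psd (fun i j => L (B i j)).

Definition trace_preserving (L : 'M[C]_2 -> 'M[C]_2) : Prop :=
  forall X : 'M[C]_2, \tr (L X) = \tr X.

Definition cptp (L : 'M[C]_2 -> 'M[C]_2) : Prop :=
  [/\ is_linear_map L, completely_positive L & trace_preserving L].

(* contractive function of pairs of qubit states, valued in an arbitrary
   partially ordered type (allows e.g. extended reals for relative entropy) *)
Definition contractive (disp : Order.disp_t) (T : porderType disp)
    (f : 'M[C]_2 -> 'M[C]_2 -> T) : Prop :=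
  forall (L : 'M[C]_2 -> 'M[C]_2) (rho sigma : 'M[C]_2),
    cptp L -> is_state rho -> is_state sigma ->
    (f (L rho) (L sigma) <= f rho sigma)%O.

End QubitDefs.

(* Main.v *)
Require Import Defs.
From HB Require Import structures.
From mathcomp Require Import all_boot all_order all_algebra.
From mathcomp Require Import ring.
Import Order.TTheory GRing.Theory Num.Theory.
Local Open Scope ring_scope.
Set Implicit Arguments. Unset Strict Implicit.

Definition v2 {C : numClosedFieldType} (x y : C) : 'cV[C]_2 :=
  \matrix_(i, j) (if i == 0 then x else y).

Lemma l01 : lift ord0 ord0 = 1 :> 'I_2. Proof. by apply/val_inj. Qed.
Lemma o0 : ord0 = 0 :> 'I_2. Proof. by apply/val_inj. Qed.

Lemma quadE (C : numClosedFieldType) (A : 'M[C]_2) (x y : C) :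
  (adjv (v2 x y) *m A *m v2 x y) 0 0 =
  x^* * (A 0 0 * x + A 0 1 * y) + y^* * (A 1 0 * x + A 1 1 * y).
Proof.
rewrite /adjv /v2 !mxE !big_ord_recl !big_ord0 !mxE.
rewrite !big_ord_recl !big_ord0 !mxE /= l01 o0. ring.
Qed.

Lemma psd_herm (C : numClosedFieldType) (A : 'M[C]_2) :
  psd A -> [/\ A 1 0 = (A 0 1)^*, (A 0 0)^* = A 0 0 & (A 1 1)^* = A 1 1].
Proof.
move=> hA.
have r1 : forall x y : C, (x^* * (A 0 0 * x + A 0 1 * y) + y^* * (A 1 0 * x + A 1 1 * y)) \is Num.real.
  by move=> x y; rewrite -quadE; apply: ger0_real; apply: hA.
have h00 := r1 1 0. have h11 := r1 0 1.
have h2 := r1 1 1. have h3 := r1 1 'i.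
rewrite !conjC1 !conjC0 !mul0r !mulr0 !addr0 !add0r !mul1r !mulr1 in h00 h11 h2 h3.
move/CrealP: h00 => e00; move/CrealP: h11 => e11.
move/CrealP: h2; move/CrealP: h3.
rewrite !rmorphD !rmorphM /= ?conjCi ?conjCK e00 e11.
move=> e3 e2.
rewrite !rmorphN !rmorphD !rmorphM /= !conjCi !opprK e11 in e3.
set a := A 0 1 in e2 e3 *; set b := A 1 0 in e2 e3 *.
have E2 : a^* + b^* - a - b = (A 0 0 + a^* + (b^* + A 1 1)) - (A 0 0 + a + (b + A 1 1)) by ring.
rewrite e2 subrr in E2.
have E3 : 'i * (b^* - a^* - a + b) =
   (A 0 0 + a^* * - 'i + 'i * (b^* + A 1 1 * - 'i)) - (A 0 0 + a * 'i + - 'i * (b + A 1 1 * 'i)) by ring.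
rewrite e3 subrr in E3.
move/eqP: E3; rewrite mulf_eq0 (negbTE (neq0Ci C)) /= => /eqP E3.
have : (b^* - a) * 2 = (a^* + b^* - a - b) + (b^* - a^* - a + b) by ring.
rewrite E2 E3 addr0.
move/eqP; rewrite mulf_eq0 pnatr_eq0 orbF subr_eq0 => /eqP hb.
by split => //; rewrite -[b]conjCK hb.
Qed.

Lemma termD (C : numClosedFieldType) (u v : 'cV[C]_2) (A B : 'M[C]_2) :
  (adjv u *m (A + B) *m v) 0 0 = (adjv u *m A *m v) 0 0 + (adjv u *m B *m v) 0 0.
Proof. by rewrite mulmxDr mulmxDl mxE. Qed.

Lemma termZ (C : numClosedFieldType) (u v : 'cV[C]_2) (c : C) (A : 'M[C]_2) :
  (adjv u *m (c *: A) *m v) 0 0 = c * (adjv u *m A *m v) 0 0.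
Proof. by rewrite -scalemxAr -scalemxAl mxE. Qed.

Lemma cp_comb (C : numClosedFieldType) (L1 L2 : 'M[C]_2 -> 'M[C]_2) (p q : C) :
  completely_positive L1 -> completely_positive L2 -> 0 <= p -> 0 <= q ->
  completely_positive (fun X => p *: L1 X + q *: L2 X).
Proof.
move=> h1 h2 hp hq n B hB v.
under eq_bigr => i _ do under eq_bigr => j _ do rewrite termD !termZ.
under eq_bigr => i _ do rewrite big_split /=.
rewrite big_split /=.
under eq_bigr => i _ do rewrite -!mulr_sumr.
rewrite -!mulr_sumr.
under [X in _ + X]eq_bigr => i _ do rewrite -mulr_sumr.
rewrite -mulr_sumr.
by apply: addr_ge0; apply: mulr_ge0 => //; [apply: h1 | apply: h2].
Qed.

Lemma psd_block1 (C : numClosedFieldType) (A : 'M[C]_2) :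
  psd A <-> block_psd (n:=1) (fun _ _ => A).
Proof.
split.
  by move=> hA v; rewrite big_ord1 big_ord1; apply: hA.
by move=> hB v; have := hB (fun _ => v); rewrite big_ord1 big_ord1.
Qed.

Lemma cp_psd (C : numClosedFieldType) (L : 'M[C]_2 -> 'M[C]_2) (X : 'M[C]_2) :
  completely_positive L -> psd X -> psd (L X).
Proof.
move=> hL /psd_block1 hX; apply/psd_block1.
exact: (hL 1%N (fun _ _ => X) hX).
Qed.

Definition ct {C : numClosedFieldType} (A : 'M[C]_2) : 'M[C]_2 :=
  (map_mx (fun z => z^*) A)^T.

Lemma adjv_mul (C : numClosedFieldType) (A : 'M[C]_2) (v : 'cV[C]_2) :
  adjv (A *m v) = adjv v *m ct A.
Proof. by rewrite /adjv /ct map_mxM trmx_mul. Qed.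

Lemma ctK (C : numClosedFieldType) (A : 'M[C]_2) : ct (ct A) = A.
Proof. by apply/matrixP => i j; rewrite !mxE conjCK. Qed.

Lemma ord2 (i : 'I_2) : i = 0 \/ i = 1.
Proof. by case: i => [[|[|k]] hk]; [left; apply/val_inj | right; apply/val_inj | ]. Qed.

Lemma mul2E (C : numClosedFieldType) (A B : 'M[C]_2) i j :
  (A *m B) i j = A i 0 * B 0 j + A i 1 * B 1 j.
Proof. by rewrite mxE !big_ord_recl big_ord0 addr0 l01 o0. Qed.

Definition Kmat {C : numClosedFieldType} (w z : C) : 'M[C]_2 :=
  \matrix_(i, j) (if i == 0 then (if j == 0 then - w^* else z)
                  else (if j == 0 then z else w)).

Definition nrm {C : numClosedFieldType} (w z : C) : C := w * w^* + z * z^*.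

Definition Mmap {C : numClosedFieldType} (w z : C) (X : 'M[C]_2) : 'M[C]_2 :=
  (nrm w z)^-1 *: (Kmat w z *m X *m ct (Kmat w z)).

Lemma nrm_ge0 (C : numClosedFieldType) (w z : C) : 0 <= nrm w z.
Proof. by rewrite /nrm addr_ge0 // mul_conjC_ge0. Qed.

Lemma nrm_eq0 (C : numClosedFieldType) (w z : C) : (w != 0) || (z != 0) -> nrm w z != 0.
Proof.
move=> h; rewrite /nrm; apply/eqP => e.
have hw := mul_conjC_ge0 w; have hz := mul_conjC_ge0 z.
have ew : w * w^* = 0 by apply/eqP; rewrite eq_le hw andbT -e lerDl.
have ez : z * z^* = 0 by move: e; rewrite ew add0r.
by move: h; rewrite -mul_conjC_eq0 ew -mul_conjC_eq0 ez eqxx.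
Qed.

Lemma lin_M (C : numClosedFieldType) (w z : C) : is_linear_map (Mmap w z).
Proof.
move=> a X Y; rewrite /Mmap mulmxDr mulmxDl -scalemxAr -scalemxAl.
by rewrite scalerDr scalerA mulrC -scalerA.
Qed.

Lemma cp_M (C : numClosedFieldType) (w z : C) : completely_positive (Mmap w z).
Proof.
move=> n B hB v; rewrite /Mmap.
under eq_bigr => i _ do under eq_bigr => j _ do rewrite termZ.
under eq_bigr => i _ do rewrite -mulr_sumr.
rewrite -mulr_sumr; apply: mulr_ge0; first by rewrite invr_ge0 nrm_ge0.
have := hB (fun i => ct (Kmat w z) *m v i).
congr (0 <= _); apply: eq_bigr => i _; apply: eq_bigr => j _.
by rewrite adjv_mul ctK !mulmxA.
Qed.

Lemma ctKmat (C : numClosedFieldType) (w z : C) : z^* = z ->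
  ct (Kmat w z) = \matrix_(i, j) (if i == 0 then (if j == 0 then - w else z)
                  else (if j == 0 then z else w^*)).
Proof.
move=> hz; apply/matrixP => i j; rewrite !mxE.
by case: (ord2 i) => ->; case: (ord2 j) => -> /=; rewrite ?rmorphN /= ?conjCK ?hz.
Qed.

Lemma tp_M (C : numClosedFieldType) (w z : C) : z^* = z -> nrm w z != 0 ->
  trace_preserving (Mmap w z).
Proof.
move=> hz hn X; rewrite /Mmap mxtraceZ mxtrace_mulC mulmxA.
have -> : ct (Kmat w z) *m Kmat w z = (nrm w z)%:M.
  rewrite ctKmat //; apply/matrixP => i j; rewrite mul2E !mxE /nrm hz.
  by case: (ord2 i) => ->; case: (ord2 j) => -> /=; ring.
by rewrite mul_scalar_mx mxtraceZ mulrA mulVf // mul1r.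
Qed.

Lemma key_M (C : numClosedFieldType) (w z : C) (a : 'M[C]_2) : z^* = z -> nrm w z != 0 ->
  w^* * a 0 1 + w * a 1 0 + z * (a 0 0 - a 1 1) = 0 ->
  Mmap w z a = a^T.
Proof.
move=> hz hn hc.
suff e : Kmat w z *m a *m ct (Kmat w z) = nrm w z *: a^T.
  by rewrite /Mmap e scalerA mulVf // scale1r.
rewrite ctKmat //; apply/matrixP => i j; rewrite !mul2E !mxE /nrm hz.
case: (ord2 i) => ->; case: (ord2 j) => -> /=;
  apply/eqP; rewrite -subr_eq0; apply/eqP.
- by transitivity (- z * (w^* * a 0 1 + w * a 1 0 + z * (a 0 0 - a 1 1))); [ring | rewrite hc mulr0].
- by transitivity (- w^* * (w^* * a 0 1 + w * a 1 0 + z * (a 0 0 - a 1 1))); [ring | rewrite hc mulr0].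
- by transitivity (- w * (w^* * a 0 1 + w * a 1 0 + z * (a 0 0 - a 1 1))); [ring | rewrite hc mulr0].
- by transitivity (z * (w^* * a 0 1 + w * a 1 0 + z * (a 0 0 - a 1 1))); [ring | rewrite hc mulr0].
Qed.

Lemma exist_wz (C : numClosedFieldType) (b d u v : C) : u^* = u -> v^* = v ->
  exists w z : C, [/\ z^* = z, (w != 0) || (z != 0),
     w^* * b + w * b^* + z * u = 0 & w^* * d + w * d^* + z * v = 0].
Proof.
move=> hu hv.
have [im0|imn0] := eqVneq (d^* * b - d * b^*) 0.
  have [b0|bn0] := eqVneq b 0.
    have [d0|dn0] := eqVneq d 0.
      exists 1, 0; rewrite oner_eq0 /= b0 d0 conjC0; split => //; ring.
    exists ('i * d), 0; rewrite conjC0 mulf_neq0 ?neq0Ci // b0 rmorphM /= conjCi conjC0.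
    split => //; ring.
  exists ('i * b), 0; rewrite conjC0 mulf_neq0 ?neq0Ci // rmorphM /= conjCi.
  split => //; first ring.
  by transitivity ('i * (d^* * b - d * b^*)); [ring | rewrite im0 mulr0].
exists ('i * (b * v - d * u)), (- 'i * (d^* * b - d * b^*)).
have cw : ('i * (b * v - d * u))^* = - 'i * (b^* * v - d^* * u).
  by rewrite rmorphM rmorphB !rmorphM /= conjCi hu hv.
have cz : (- 'i * (d^* * b - d * b^*))^* = - 'i * (d^* * b - d * b^*).
  by rewrite rmorphM rmorphN rmorphB !rmorphM /= conjCi !conjCK; ring.
rewrite cw cz; split => //; try ring.
by apply/orP; right; rewrite mulf_neq0 // oppr_eq0 neq0Ci.
Qed.

Lemma cptp_comb (C : numClosedFieldType) (E1 E2 : 'M[C]_2 -> 'M[C]_2) (p : C) :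
  cptp E1 -> cptp E2 -> 0 <= p <= 1 ->
  cptp (fun X => p *: E1 X + (1 - p) *: E2 X).
Proof.
case=> l1 c1 t1 [l2 c2 t2] /andP[p0 p1]; split.
- move=> a X Y; rewrite l1 l2 !scalerDr !scalerA (mulrC p) (mulrC (1 - p)) -!scalerA.
  by rewrite !addrA; congr (_ + _); rewrite -!addrA; congr (_ + _); rewrite addrC.
- by apply: cp_comb => //; rewrite subr_ge0.
- by move=> X; rewrite mxtraceD !mxtraceZ t1 t2 -mulrDl addrC subrK mul1r.
Qed.

Lemma cptp_comp (C : numClosedFieldType) (E M : 'M[C]_2 -> 'M[C]_2) :
  cptp E -> cptp M -> cptp (fun X => E (M X)).
Proof.
case=> l1 c1 t1 [l2 c2 t2]; split.
- by move=> a X Y; rewrite l2 l1.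
- by move=> n B hB; apply: c1; apply: c2.
- by move=> X; rewrite t1 t2.
Qed.

Unset Implicit Arguments.

Theorem theorem1 (C : numClosedFieldType) (R : realFieldType)
  (Lam : R -> 'M[C]_2 -> 'M[C]_2)
  (hcptp : forall t : R, 0 <= t -> cptp (Lam t))
  (hid : forall X : 'M[C]_2, Lam 0 X = X)
  (hdec : forall s t : R, 0 <= s -> s <= t ->
     exists (V : 'M[C]_2 -> 'M[C]_2) (p : C) (E1 E2 : 'M[C]_2 -> 'M[C]_2),
       is_linear_map V /\
       (forall X : 'M[C]_2, Lam t X = V (Lam s X)) /\
       0 <= p <= 1 /\
       cptp E1 /\ cptp E2 /\
       (forall X : 'M[C]_2, V X = p *: E1 X + (1 - p) *: E2 X^T)) :
  forall (disp : Order.disp_t) (T : porderType disp)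
         (f : 'M[C]_2 -> 'M[C]_2 -> T),
    contractive f ->
    forall rho sigma : 'M[C]_2, is_state rho -> is_state sigma ->
    forall s t : R, 0 <= s -> s <= t ->
      (f (Lam t rho) (Lam t sigma) <= f (Lam s rho) (Lam s sigma))%O.
Proof.
move=> disp T f hf rho sigma [hr tr] [hs ts] s t s0 st.
have [ls cs tps] := hcptp s s0.
have sa : is_state (Lam s rho) by split; [apply: cp_psd | rewrite tps].
have sb : is_state (Lam s sigma) by split; [apply: cp_psd | rewrite tps].
set a := Lam s rho in sa *; set b := Lam s sigma in sb *.
have [ha10 ha00 ha11] := psd_herm (proj1 sa).
have [hb10 hb00 hb11] := psd_herm (proj1 sb).
have [w [z [hz hwz ca cb]]] := exist_wz (a 0 1) (b 0 1) (u := a 0 0 - a 1 1) (v := b 0 0 - b 1 1)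
   ltac:(by rewrite rmorphB /= ha00 ha11) ltac:(by rewrite rmorphB /= hb00 hb11).
have hn := nrm_eq0 hwz.
have cM : cptp (Mmap w z) by split; [apply: lin_M | apply: cp_M | apply: tp_M].
have [V [p [E1 [E2 [_ [hV [hp [h1 [h2 hVE]]]]]]]]] := hdec s t s0 st.
have cL := cptp_comb h1 (cptp_comp h2 cM) hp.
have Ma : Mmap w z a = a^T by apply: key_M => //; rewrite ha10.
have Mb : Mmap w z b = b^T by apply: key_M => //; rewrite hb10.
rewrite !hV !hVE -Ma -Mb.
exact: (hf _ _ _ cL sa sb).
Qed.
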